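(* Let $d\ge 2$ and let $K\subset\mathbb{R}^d$ be a nondegenerate $d$-simplex with vertices $a_1,\dots,a_{d+1}$, barycentric coordinates $\lambda_1,\dots,\lambda_{d+1}$, and edge vectors $e_{ij}=a_j-a_i$. Let $$Z_K=\mathbb{P}_2(K)\oplus\operatorname{span}\{\lambda_i^2\lambda_j-\lambda_i\lambda_j^2:\ 1\le i<j\le d+1\},$$ $$\Sigma_K=\{p\mapsto p(a_i),\ p\mapsto (e_{ij}\cdot\nabla p)(a_i):\ 1\le i\le d+1,\ j\ne i\}.$$ Then $\Sigma_K$ is $Z_K$-unisolvent, i.e. every $p\in Z_K$ is uniquely determined by the values of the functionals in $\Sigma_K$. Moreover, the nodal basis functions $\phi_i$ (dual to $p(a_i)$) and $\phi_{ij}$ (dual to $(e_{ij}\cdot\nabla p)(a_i)$) are $$\phi_i=\lambda_i+\sum_{j\ne i}(\lambda_i^2\lambda_j-\lambda_i\lambda_j^2),\qquad \phi_{ij}=\tfrac12\bigl(\lambda_i\lambda_j+\lambda_i^2\lambda_j-\lambda_i\lambda_j^2\bigr).$$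
   Context: $\mathbb{P}_2(K)$ denotes polynomials of total degree at most $2$ on $K$. ''Dual'' means $\phi_i(a_k)=\delta_{ik}$, $(e_{kl}\cdot\nabla\phi_i)(a_k)=0$ for all $k\ne l$, and $\phi_{ij}(a_k)=0$, $(e_{kl}\cdot\nabla\phi_{ij})(a_k)=\delta_{ik}\delta_{jl}$. *)

(* Defs.v *)
From mathcomp Require Import all_boot all_algebra.
From mathcomp Require Import mpoly.
Set Implicit Arguments. Unset Strict Implicit. Unset Printing Implicit Defensive.
Import GRing.Theory Num.Theory.
Local Open Scope ring_scope.

Section Defs.
Variables (R : realFieldType) (d : nat).

Definition pt := 'I_d -> R.

Definition nondeg_simplex (a : 'I_d.+1 -> pt) : Prop :=
  \det (\matrix_(i < d, k < d) (a (lift ord0 i) k - a ord0 k)) != 0.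

(* Barycentric coordinates: affine (degree <= 1) polynomials with
   lam_i(a_k) = delta_ik. *)
Definition barycentric (a : 'I_d.+1 -> pt) (lam : 'I_d.+1 -> {mpoly R[d]}) : Prop :=
  (forall i, (msize (lam i) <= 2)%N) /\
  (forall i k, (lam i).@[a k] = (i == k)%:R).

Definition edge (a : 'I_d.+1 -> pt) (i j : 'I_d.+1) : pt := fun k => a j k - a i k.

Definition dderiv (e : pt) (p : {mpoly R[d]}) : {mpoly R[d]} :=
  \sum_(k < d) e k *: p^`M(k).

Definition bub (lam : 'I_d.+1 -> {mpoly R[d]}) (i j : 'I_d.+1) : {mpoly R[d]} :=
  lam i ^+ 2 * lam j - lam i * lam j ^+ 2.

Definition inP2 (p : {mpoly R[d]}) : Prop := (msize p <= 3)%N.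

Definition inZ (lam : 'I_d.+1 -> {mpoly R[d]}) (p : {mpoly R[d]}) : Prop :=
  exists (q : {mpoly R[d]}) (c : 'I_d.+1 -> 'I_d.+1 -> R),
    inP2 q /\ p = q + \sum_(i < d.+1) \sum_(j < d.+1 | (i < j)%N) c i j *: bub lam i j.

Definition phi_v (lam : 'I_d.+1 -> {mpoly R[d]}) (i : 'I_d.+1) : {mpoly R[d]} :=
  lam i + \sum_(j < d.+1 | j != i) bub lam i j.

Definition phi_e (lam : 'I_d.+1 -> {mpoly R[d]}) (i j : 'I_d.+1) : {mpoly R[d]} :=
  2^-1 *: (lam i * lam j + bub lam i j).

End Defs.

(* Main.v *)
Require Import Defs.
From mathcomp Require Import all_boot all_algebra.
From mathcomp Require Import mpoly.
From mathcomp Require Import ring lra.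
Set Implicit Arguments. Unset Strict Implicit. Unset Printing Implicit Defensive.
Import GRing.Theory Num.Theory.
Local Open Scope ring_scope.

Section S.
Variables (R : realFieldType) (d : nat).
Local Notation P := {mpoly R[d]}.
Implicit Types (p q : P) (e : pt R d).

Lemma dderivD e : {morph dderiv e : p q / p + q}.
Proof. move=> p q; rewrite /dderiv -big_split /=; apply eq_bigr => k _; by rewrite mderivD scalerDr. Qed.
Lemma dderivZ e c p : dderiv e (c *: p) = c *: dderiv e p.
Proof. rewrite /dderiv scaler_sumr; apply eq_bigr => k _; by rewrite mderivZ !scalerA mulrC. Qed.
Lemma dderiv0 e : dderiv e 0 = 0.
Proof. by rewrite /dderiv big1 // => k _; rewrite mderiv0 scaler0. Qed.
Lemma dderivN e p : dderiv e (- p) = - dderiv e p.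
Proof. by rewrite -scaleN1r dderivZ scaleN1r. Qed.
Lemma dderivB e p q : dderiv e (p - q) = dderiv e p - dderiv e q.
Proof. by rewrite dderivD dderivN. Qed.
Lemma dderiv_sum e (I : Type) (r : seq I) (Pr : pred I) (F : I -> P) :
  dderiv e (\sum_(i <- r | Pr i) F i) = \sum_(i <- r | Pr i) dderiv e (F i).
Proof. exact: (big_morph _ (dderivD e) (dderiv0 e)). Qed.
Lemma dderivC e c : dderiv e c%:MP = 0.
Proof. by rewrite /dderiv big1 // => k _; rewrite mderivC scaler0. Qed.
Lemma dderivM e p q : dderiv e (p * q) = dderiv e p * q + p * dderiv e q.
Proof.
rewrite /dderiv; under eq_bigr do rewrite mderivM scalerDr.
rewrite big_split /= mulr_suml mulr_sumr.
congr (_ + _); apply eq_bigr => k _; [by rewrite scalerAl | by rewrite scalerAr].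
Qed.
Lemma dderivX e j : dderiv e 'X_j = (e j)%:MP.
Proof.
rewrite /dderiv (bigD1 j) //= big1 => [|k kj].
  rewrite mderivX mnm1E eqxx.
  have -> : (U_(j) - U_(j))%MM = 0%MM by apply/mnmP => i; rewrite mnmBE subnn mnmE.
  by rewrite mpolyX0 scale1r addr0 -alg_mpolyC.
by rewrite mderivX mnm1E eq_sym (negbTE kj) scale0r scaler0.
Qed.
Lemma dderiv_eq e1 e2 p : e1 =1 e2 -> dderiv e1 p = dderiv e2 p.
Proof. by move=> E; apply eq_bigr => k _; rewrite E. Qed.
Lemma dderiv_lin (I : finType) (mu : I -> R) (E : I -> pt R d) p :
  dderiv (fun k => \sum_l mu l * E l k) p = \sum_l mu l *: dderiv (E l) p.
Proof.
rewrite /dderiv; under eq_bigr do rewrite scaler_suml.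
rewrite exchange_big; apply eq_bigr => l _; rewrite scaler_sumr.
by apply eq_bigr => k _; rewrite scalerA.
Qed.
Lemma dderivNe e p : dderiv (fun k => - e k) p = - dderiv e p.
Proof. by rewrite /dderiv -sumrN; apply eq_bigr => k _; rewrite scaleNr. Qed.

Definition aff (f : P) := exists c0 (c : 'I_d -> R), f = c0%:MP + \sum_k c k *: ('X_k : P).

Lemma aff_eval f c0 c x : f = c0%:MP + \sum_k c k *: ('X_k : P) ->
  f.@[x] = c0 + \sum_k c k * x k.
Proof.
by move=> ->; rewrite mevalD mevalC (big_morph _ (mevalD x) (meval0 x)); congr (_ + _); apply eq_bigr => k _; rewrite mevalZ mevalXU.
Qed.

Lemma aff_dderiv f : aff f -> forall e x,
  dderiv e f = (f.@[fun k => x k + e k] - f.@[x])%:MP.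
Proof.
move=> [c0 [c fE]] e x; rewrite !(aff_eval _ fE) fE dderivD dderivC add0r dderiv_sum.
rewrite opprD addrACA subrr add0r -sumrB -alg_mpolyC scaler_suml; apply eq_bigr => k _.
by rewrite dderivZ dderivX -alg_mpolyC scalerA mulrDr addrC addKr.
Qed.


Lemma affD f g : aff f -> aff g -> aff (f + g).
Proof.
move=> [c0 [c fE]] [e0 [e gE]]; exists (c0 + e0), (fun k => c k + e k).
rewrite fE gE mpolyCD; under [X in _ = _ + X]eq_bigr do rewrite scalerDl.
by rewrite big_split /= addrACA.
Qed.
Lemma affZ a f : aff f -> aff (a *: f).
Proof.
move=> [c0 [c fE]]; exists (a * c0), (fun k => a * c k).
rewrite fE scalerDr scaler_sumr -!alg_mpolyC scalerA; congr (_ + _).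
by apply eq_bigr => k _; rewrite scalerA.
Qed.
Lemma affC a : aff a%:MP.
Proof. by exists a, (fun _ => 0); rewrite big1 ?addr0 // => k _; rewrite scale0r. Qed.
Lemma aff0 : aff 0.
Proof. by rewrite -mpolyC0; apply: affC. Qed.
Lemma affX j : aff ('X_j : P).
Proof.
exists 0, (fun k => (k == j)%:R); rewrite mpolyC0 add0r (bigD1 j) //= eqxx scale1r big1 ?addr0 //.
by move=> k /negbTE ->; rewrite scale0r.
Qed.
Lemma aff_mulC a f : aff f -> aff (a%:MP * f).
Proof. by move=> hf; rewrite -alg_mpolyC mulr_algl; apply: affZ. Qed.

Lemma aff_of_msize f : (msize f <= 2)%N -> aff f.
Proof.
move=> hs; exists f@_0, (fun k => f@_U_(k)); apply/mpolyP => m.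
rewrite mcoeffD mcoeffC (big_morph _ (mcoeffD m) (mcoeff0 _ m)).
under eq_bigr do rewrite mcoeffZ mcoeffX.
have [->|m0] := eqVneq m 0%MM.
  by rewrite mulr1 big1 ?addr0 // => k _; rewrite mnm1_eq0 mulr0.
rewrite mulr0 add0r.
have [/mdeg1P [i /eqP ->]|m1] := boolP (mdeg m == 1%N).
  rewrite (bigD1 i) //= eqxx mulr1 big1 ?addr0 // => k /negbTE ki.
  by rewrite eq_mnm1 ki mulr0.
rewrite big1 => [|k _].
  apply/eqP; rewrite mcoeff_eq0; apply: msize_mdeg_ge; apply: (leq_trans hs).
  by move: m1 m0; rewrite -mdeg_eq0; case: (mdeg m) => [|[|n]].
have -> : (U_(k)%MM == m) = false.
  by apply/negbTE; apply: contra m1 => /eqP <-; rewrite mdeg1.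
by rewrite mulr0.
Qed.

Lemma mono1 (m : 'X_{1..d}) : (mdeg m < 2)%N -> aff 'X_[m].
Proof.
move=> hm; have [->|m0] := eqVneq m 0%MM; first by rewrite mpolyX0 -mpolyC1; apply: affC.
have /mdeg1P [i /eqP ->] : mdeg m == 1%N.
  by move: hm m0; rewrite -mdeg_eq0; case: (mdeg m) => [|[|n]].
exact: affX.
Qed.

Lemma mono2 (m : 'X_{1..d}) : (mdeg m < 3)%N -> exists f g, [/\ aff f, aff g & 'X_[m] = f * g].
Proof.
move=> hm; have [->|m0] := eqVneq m 0%MM.
  by exists 1, 1; rewrite mpolyX0 mulr1 -mpolyC1; split => //; apply: affC.
have [i mi] : exists i, m i != 0%N.
  apply/existsP; apply: contraR m0 => /existsPn H; apply/eqP/mnmP => i.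
  by rewrite mnmE; move: (H i); rewrite negbK => /eqP.
have E : m = (m - U_(i) + U_(i))%MM by rewrite submK // lep1mP.
exists 'X_[m - U_(i)], 'X_i; split; last by rewrite {1}E mpolyXD.
  by apply: mono1; move: hm; rewrite {1}E mdegD mdeg1 addn1.
exact: affX.
Qed.

Lemma quad_ind (Pp : P -> Prop) : Pp 0 ->
  (forall c p q, Pp p -> Pp q -> Pp (c *: p + q)) ->
  (forall f g, aff f -> aff g -> Pp (f * g)) ->
  forall q, (msize q <= 3)%N -> Pp q.
Proof.
move=> P0 PC PM q hq; rewrite (mpolyE q).
have : all (fun m => mdeg m < 3)%N (msupp q).
  by apply/allP => m /msize_mdeg_lt /leq_trans; apply.
elim: (msupp q) => [|m s IH]; first by rewrite big_nil.
rewrite /= big_cons => /andP [hm /IH Hs]; apply: PC => //.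
by have [f [g [hf hg ->]]] := mono2 hm; apply: PM.
Qed.

Definition shift (x e : pt R d) : pt R d := fun k => x k + e k.

Lemma trap q : (msize q <= 3)%N -> forall x e,
  (dderiv e q).@[x] + (dderiv e q).@[shift x e] = 2 * (q.@[shift x e] - q.@[x]).
Proof.
move: q; apply: (@quad_ind (fun q => forall x e,
  (dderiv e q).@[x] + (dderiv e q).@[shift x e] = 2 * (q.@[shift x e] - q.@[x]))).
- by move=> x e; rewrite dderiv0 !meval0 subrr mulr0 addr0.
- move=> c p q Hp Hq x e; rewrite dderivD dderivZ !mevalD !mevalZ.
  rewrite addrACA -mulrDr Hp Hq; ring.
- move=> f g hf hg x e; rewrite dderivM (aff_dderiv hf e x) (aff_dderiv hg e x).
  rewrite !mevalD !mevalM !mevalC /shift; ring.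
Qed.

Lemma daff q : (msize q <= 3)%N -> forall v, aff (dderiv v q).
Proof.
move: q; apply: (@quad_ind (fun q => forall v, aff (dderiv v q))).
- by move=> v; rewrite dderiv0; apply: aff0.
- by move=> c p q Hp Hq v; rewrite dderivD dderivZ; apply: affD; [apply: affZ|].
- move=> f g hf hg v; rewrite dderivM (aff_dderiv hf v (fun _ => 0)) (aff_dderiv hg v (fun _ => 0)).
  by apply: affD; [|rewrite mulrC]; apply: aff_mulC.
Qed.


Section T.
Variables (a : 'I_d.+1 -> pt R d) (lam : 'I_d.+1 -> P).
Hypotheses (hK : nondeg_simplex a) (hlam : barycentric a lam).

Local Notation M := (\matrix_(i < d, k < d) (a (lift ord0 i) k - a ord0 k)).

Lemma M_unit : M \in unitmx.
Proof. by rewrite unitmxE unitfE. Qed.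

Lemma aff_zero f : aff f -> (forall m, f.@[a m] = 0) -> f = 0.
Proof.
move=> hf; have [c0 [c fE]] := hf => hz.
pose v : 'cV[R]_d := \col_k c k.
have Mv : M *m v = 0.
  apply/matrixP => i j; rewrite !mxE.
  have := hz (lift ord0 i); have := hz ord0; rewrite !(aff_eval _ fE) => h0 h1.
  have : (c0 + \sum_k c k * a (lift ord0 i) k) - (c0 + \sum_k c k * a ord0 k) = 0.
    by rewrite h0 h1 subrr.
  rewrite opprD addrACA subrr add0r -sumrB => E; rewrite -[RHS]E.
  by apply eq_bigr => k _; rewrite !mxE mulrC mulrBr.
have v0 : v = 0 by rewrite -(mulKmx M_unit v) Mv mulmx0.
have c0E : forall k, c k = 0.
  by move=> k; have := congr1 (fun w : 'cV[R]_d => w k ord0) v0; rewrite !mxE.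
have : f = c0%:MP by rewrite fE big1 ?addr0 // => k _; rewrite c0E scale0r.
move=> fc; move: (hz ord0); rewrite fc mevalC => ->; by rewrite mpolyC0.
Qed.

Lemma shift_edge k l : shift (a k) (edge a k l) =1 a l.
Proof. by move=> j; rewrite /shift /edge addrC subrK. Qed.

Lemma lam_aff m : aff (lam m).
Proof. apply: aff_of_msize; exact: hlam.1. Qed.

Lemma lam_val m k : (lam m).@[a k] = (m == k)%:R.
Proof. exact: hlam.2. Qed.

Lemma dlam m k l : dderiv (edge a k l) (lam m) = ((m == l)%:R - (m == k)%:R)%:MP.
Proof.
rewrite (aff_dderiv (lam_aff m) _ (a k)) (meval_eq _ (shift_edge k l)).
by rewrite !lam_val.
Qed.

Lemma bub_val x y k : x != y -> (bub lam x y).@[a k] = 0.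
Proof.
move=> xy; rewrite /bub !expr2 !mevalB !mevalM !lam_val.
have H : (x == k) && (y == k) = false.
  by apply/negbTE; apply: contra xy => /andP[/eqP-> /eqP->].
by move: H; case: (x == k); case: (y == k) => //= _; ring.
Qed.

Lemma bub_der x y k l : x != y ->
  (dderiv (edge a k l) (bub lam x y)).@[a k] =
  ((x == k) && (y == l))%:R - ((x == l) && (y == k))%:R.
Proof.
move=> xy; rewrite /bub dderivB !expr2 !dderivM !dlam.
rewrite !(mevalB, mevalD, mevalM, mevalC, lam_val).
have H1 : (x == k) && (y == k) = false.
  by apply/negbTE; apply: contra xy => /andP[/eqP-> /eqP->].
have H2 : (x == l) && (y == l) = false.
  by apply/negbTE; apply: contra xy => /andP[/eqP-> /eqP->].
by move: H1 H2; case: (x == k); case: (y == k); case: (x == l); case: (y == l) => //= _ _; ring.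
Qed.


Lemma dderiv_edgeN k l p : dderiv (edge a l k) p = - dderiv (edge a k l) p.
Proof.
rewrite -dderivNe; apply: dderiv_eq => j; by rewrite /edge opprB.
Qed.

Lemma dderiv_edgeD m k l p :
  dderiv (edge a k l) p = dderiv (edge a m l) p - dderiv (edge a m k) p.
Proof.
rewrite /dderiv -sumrB; apply eq_bigr => j _; rewrite -scalerBl /edge; congr (_ *: _).
by rewrite opprB addrA subrK.
Qed.

Lemma trapv q k l : (msize q <= 3)%N ->
  (dderiv (edge a k l) q).@[a k] + (dderiv (edge a k l) q).@[a l] = 2 * (q.@[a l] - q.@[a k]).
Proof.
move=> hq; have := trap hq (a k) (edge a k l).
by rewrite !(meval_eq _ (shift_edge k l)).
Qed.

Lemma q_zero q : (msize q <= 3)%N -> (forall k, q.@[a k] = 0) ->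
  (forall k l, k != l -> (dderiv (edge a k l) q).@[a k] = 0) -> q = 0.
Proof.
move=> hq hv hd.
have E0 : forall k l, k != l -> dderiv (edge a k l) q = 0.
  move=> k l kl; apply: aff_zero; first exact: daff.
  move=> m; have [->|mk] := eqVneq m k; first exact: hd.
  have [->|ml] := eqVneq m l.
    by rewrite dderiv_edgeN mevalN hd ?oppr0 // eq_sym.
  by rewrite (dderiv_edgeD m) mevalB !hd ?subrr // eq_sym.
have Dj : forall j, q^`M(j) = 0.
  move=> j; pose Mi := invmx M.
  have H : dderiv (fun k => \sum_i Mi j i * edge a ord0 (lift ord0 i) k) q = 0.
    by rewrite dderiv_lin big1 // => i _; rewrite E0 ?scaler0 // neq_lift.
  have eE : forall k, \sum_i Mi j i * edge a ord0 (lift ord0 i) k = (j == k)%:R.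
    move=> k; have := congr1 (fun A : 'M[R]_d => A j k) (mulVmx M_unit).
    rewrite /= !mxE => <-; by apply eq_bigr => i _; rewrite !mxE.
  rewrite -H /dderiv (bigD1 j) //= eE eqxx scale1r big1 ?addr0 // => k kj.
  by rewrite eE eq_sym (negbTE kj) scale0r.
have qC : q = (q@_0)%:MP.
  apply/mpolyP => m; rewrite mcoeffC.
  have [->|m0] := eqVneq m 0%MM; first by rewrite mulr1.
  rewrite mulr0.
  have [i mi] : exists i, m i != 0%N.
    apply/existsP; apply: contraR m0 => /existsPn H; apply/eqP/mnmP => i.
    by rewrite mnmE; move: (H i); rewrite negbK => /eqP.
  have E : m = (m - U_(i) + U_(i))%MM by rewrite submK // lep1mP.
  have := mcoeff_deriv i (m - U_(i))%MM q; rewrite -E Dj mcoeff0 => /esym/eqP.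
  by rewrite mulrn_eq0 /= => /eqP.
by move: (hv ord0); rewrite qC mevalC => ->; rewrite mpolyC0.
Qed.


Lemma inZ_lin c p p' : inZ lam p -> inZ lam p' -> inZ lam (c *: p + p').
Proof.
move=> [q [e [hq ->]]] [q' [e' [hq' ->]]].
exists (c *: q + q'), (fun x y => c * e x y + e' x y); split.
  rewrite /inP2; apply: (leq_trans (msizeD_le _ _)); rewrite geq_max hq'.
  by rewrite (leq_trans (msizeZ_le _ _)).
rewrite scalerDr addrACA; congr (_ + _).
rewrite scaler_sumr -big_split; apply eq_bigr => x _.
rewrite scaler_sumr -big_split; apply eq_bigr => y _.
by rewrite scalerDl scalerA.
Qed.

Lemma inZ_P2 q : (msize q <= 3)%N -> inZ lam q.
Proof.
move=> hq; exists q, (fun _ _ => 0); split => //.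
by rewrite big1 ?addr0 // => x _; rewrite big1 // => y _; rewrite scale0r.
Qed.

Lemma inZ0 : inZ lam 0.
Proof. by apply: inZ_P2; rewrite msize0. Qed.

Lemma inZ_add p p' : inZ lam p -> inZ lam p' -> inZ lam (p + p').
Proof. by move=> h h'; rewrite -[p]scale1r; apply: inZ_lin. Qed.

Lemma inZ_scale c p : inZ lam p -> inZ lam (c *: p).
Proof. by move=> h; rewrite -[_ *: _]addr0; apply: inZ_lin => //; apply: inZ0. Qed.

Lemma inZ_sum (I : Type) (r : seq I) (Pr : pred I) (F : I -> P) :
  (forall i, Pr i -> inZ lam (F i)) -> inZ lam (\sum_(i <- r | Pr i) F i).
Proof. by move=> h; apply: big_ind => //; [apply: inZ0 | apply: inZ_add]. Qed.

Lemma inZ_bub_lt (x y : 'I_d.+1) : (x < y)%N -> inZ lam (bub lam x y).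
Proof.
move=> xy; exists 0, (fun u v => ((u == x) && (v == y))%:R); split.
  by rewrite /inP2 msize0.
rewrite add0r (bigD1 x) //= (bigD1 y) //= !eqxx /= scale1r.
rewrite big1 => [|v /andP [_ /negbTE vy]]; last by rewrite vy scale0r.
rewrite addr0 big1 ?addr0 // => u /negbTE ux; rewrite big1 // => v _.
by rewrite ux scale0r.
Qed.

Lemma bubC x y : bub lam x y = - bub lam y x.
Proof. rewrite /bub; ring. Qed.

Lemma inZ_bub x y : x != y -> inZ lam (bub lam x y).
Proof.
move=> xy; have [lt|gt|eq] := ltngtP x y.
- exact: inZ_bub_lt.
- by rewrite bubC -scaleN1r; apply: inZ_scale; apply: inZ_bub_lt.
- by move/val_inj: eq xy => ->; rewrite eqxx.
Qed.

Lemma lam_msize m : (msize (lam m) <= 2)%N.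
Proof. exact: hlam.1. Qed.

Lemma lamM_msize x y : (msize (lam x * lam y) <= 3)%N.
Proof.
have [->|nx] := eqVneq (lam x) 0; first by rewrite mul0r msize0.
have [->|ny] := eqVneq (lam y) 0; first by rewrite mulr0 msize0.
rewrite msizeM //; have := lam_msize x; have := lam_msize y.
case: (msize (lam x)) => [|[|[|n]]] //; case: (msize (lam y)) => [|[|[|n']]] //.
Qed.


Lemma eq_sym_neq (k l : 'I_d.+1) : k != l -> l != k.
Proof. by rewrite eq_sym. Qed.

Lemma ltne (x y : 'I_d.+1) : (x < y)%N -> x != y.
Proof. by move=> xy; apply/eqP => E; move: xy; rewrite E ltnn. Qed.

Definition Tkl (c : 'I_d.+1 -> 'I_d.+1 -> R) (k l : 'I_d.+1) : R :=
  \sum_(x < d.+1) \sum_(y < d.+1 | (x < y)%N) c x y * (((x == k) && (y == l))%:R - ((x == l) && (y == k))%:R).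

Lemma TklN c k l : Tkl c l k = - Tkl c k l.
Proof.
rewrite /Tkl -sumrN; apply eq_bigr => x _; rewrite -sumrN; apply eq_bigr => y _.
by rewrite -mulrN opprB.
Qed.

Lemma TklE c (x y : 'I_d.+1) : (x < y)%N -> Tkl c x y = c x y.
Proof.
move=> xy; rewrite /Tkl (bigD1 x) //= (bigD1 y) //= !eqxx /= (negbTE (ltne xy)) /= subr0 mulr1.
rewrite big1 => [|v /andP [_ /negbTE vy]]; last by rewrite vy /= subrr mulr0.
rewrite addr0 big1 ?addr0 // => u /negbTE ux; rewrite big1 // => v uv.
rewrite ux /=; case: (u =P y) => [uy|_]; last by rewrite /= subrr mulr0.
case: (v =P x) => [vx|_]; last by rewrite /= subrr mulr0.
by move: uv; rewrite uy vx ltnNge ltnW.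
Qed.

Lemma uniq0 r : inZ lam r -> (forall k, r.@[a k] = 0) ->
  (forall k l, k != l -> (dderiv (edge a k l) r).@[a k] = 0) -> r = 0.
Proof.
move=> [q [c [hq rE]]] hv hd.
set S := (\sum_(x < d.+1) \sum_(y < d.+1 | (x < y)%N) c x y *: bub lam x y) in rE.
have Sv : forall k, S.@[a k] = 0.
  move=> k; rewrite /S (big_morph _ (mevalD _) (meval0 _)) big1 // => x _.
  rewrite (big_morph _ (mevalD _) (meval0 _)) big1 // => y xy.
  by rewrite mevalZ bub_val ?mulr0 // ltne.
have Sd : forall k l, (dderiv (edge a k l) S).@[a k] = Tkl c k l.
  move=> k l; rewrite /S dderiv_sum (big_morph _ (mevalD _) (meval0 _)); apply eq_bigr => x _.
  rewrite dderiv_sum (big_morph _ (mevalD _) (meval0 _)); apply eq_bigr => y xy.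
  by rewrite dderivZ mevalZ bub_der // ltne.
have qv : forall k, q.@[a k] = 0.
  by move=> k; have := hv k; rewrite rE mevalD Sv addr0.
have hd' : forall k l, k != l -> (dderiv (edge a k l) q).@[a k] + Tkl c k l = 0.
  by move=> k l kl; have := hd k l kl; rewrite rE dderivD mevalD Sd.
have T0 : forall k l, k != l -> Tkl c k l = 0 /\ (dderiv (edge a k l) q).@[a k] = 0.
  move=> k l kl.
  have h1 := hd' k l kl; have h2 := hd' l k (eq_sym_neq kl); have h3 := trapv k l hq.
  rewrite !qv subrr mulr0 in h3.
  rewrite dderiv_edgeN mevalN TklN in h2.
  split; lra.
have qz : q = 0 by apply: q_zero => // k l kl; case: (T0 k l kl).
have S0 : S = 0.
  rewrite /S big1 // => x _; rewrite big1 // => y xy.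
  by have := (T0 x y (ltne xy)).1; rewrite TklE // => ->; rewrite scale0r.
by rewrite rE qz S0 addr0.
Qed.


Lemma andR (b c : bool) : ((b && c)%:R : R) = b%:R * c%:R.
Proof. by case: b; case: c; rewrite /= ?mul1r ?mul0r. Qed.

Lemma sum_ind (i l : 'I_d.+1) : \sum_(j < d.+1 | j != i) ((j == l)%:R : R) = (l != i)%:R.
Proof.
have [->|li] := eqVneq l i; first by rewrite big1 // => j /negbTE ->.
by rewrite (bigD1 l) //= eqxx big1 ?addr0 // => j /andP [_ /negbTE ->].
Qed.

Lemma phi_v_inZ i : inZ lam (phi_v lam i).
Proof.
apply: inZ_add; first by apply: inZ_P2; apply: (leq_trans (lam_msize i)).
by apply: inZ_sum => j ji; apply: inZ_bub; rewrite eq_sym.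
Qed.

Lemma phi_v_val i k : (phi_v lam i).@[a k] = (i == k)%:R.
Proof.
rewrite /phi_v mevalD lam_val (big_morph _ (mevalD _) (meval0 _)) big1 ?addr0 // => j ji.
by apply: bub_val; rewrite eq_sym.
Qed.

Lemma phi_v_der i k l : k != l -> (dderiv (edge a k l) (phi_v lam i)).@[a k] = 0.
Proof.
move=> kl; rewrite /phi_v dderivD mevalD dlam mevalC dderiv_sum.
rewrite (big_morph _ (mevalD _) (meval0 _)).
rewrite (eq_bigr (fun j => (i == k)%:R * (j == l)%:R - (i == l)%:R * (j == k)%:R)); last first.
  by move=> j ji; rewrite bub_der ?andR // eq_sym.
rewrite sumrB -!mulr_sumr !sum_ind ![_ == i]eq_sym.
have H : (i == k) && (i == l) = false.
  by apply/negbTE; apply: contra kl => /andP [/eqP <- /eqP <-].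
by move: H; case: (i == k); case: (i == l) => //= _; ring.
Qed.

Lemma phi_e_inZ i j : i != j -> inZ lam (phi_e lam i j).
Proof.
move=> ij; apply: inZ_scale; apply: inZ_add; last exact: inZ_bub.
by apply: inZ_P2; apply: lamM_msize.
Qed.

Lemma phi_e_val i j k : i != j -> (phi_e lam i j).@[a k] = 0.
Proof.
move=> ij; rewrite /phi_e mevalZ mevalD mevalM !lam_val bub_val //.
have H : (i == k) && (j == k) = false.
  by apply/negbTE; apply: contra ij => /andP[/eqP-> /eqP->].
by move: H; case: (i == k); case: (j == k) => //= _; ring.
Qed.

Lemma phi_e_der i j k l : i != j -> k != l ->
  (dderiv (edge a k l) (phi_e lam i j)).@[a k] = ((i == k) && (j == l))%:R.
Proof.
move=> ij kl; rewrite /phi_e dderivZ dderivD dderivM !dlam mevalZ mevalD bub_der //.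
rewrite !(mevalD, mevalM, mevalC, lam_val).
have H1 : (i == k) && (j == k) = false.
  by apply/negbTE; apply: contra ij => /andP[/eqP-> /eqP->].
have H2 : (i == l) && (j == l) = false.
  by apply/negbTE; apply: contra ij => /andP[/eqP-> /eqP->].
have H3 : (i == k) && (i == l) = false.
  by apply/negbTE; apply: contra kl => /andP[/eqP<- /eqP<-].
have H4 : (j == k) && (j == l) = false.
  by apply/negbTE; apply: contra kl => /andP[/eqP<- /eqP<-].
move: H1 H2 H3 H4; case: (i == k); case: (j == k); case: (i == l); case: (j == l) => //= _ _ _ _.
all: rewrite ?(subr0, sub0r, mulr0, mul0r, addr0, add0r, mulr1, mul1r, subrr, oppr0).
all: try (by rewrite mulr0).
all: by field.
Qed.


Definition pex (f : 'I_d.+1 -> R) (g : 'I_d.+1 -> 'I_d.+1 -> R) : P :=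
  \sum_(m < d.+1) f m *: phi_v lam m +
  \sum_(m < d.+1) \sum_(n < d.+1 | n != m) g m n *: phi_e lam m n.

Lemma pex_inZ f g : inZ lam (pex f g).
Proof.
apply: inZ_add; apply: inZ_sum => m _.
  by apply: inZ_scale; apply: phi_v_inZ.
by apply: inZ_sum => n nm; apply: inZ_scale; apply: phi_e_inZ; rewrite eq_sym.
Qed.

Lemma pex_val f g k : (pex f g).@[a k] = f k.
Proof.
rewrite /pex mevalD !(big_morph _ (mevalD _) (meval0 _)).
rewrite [X in _ + X]big1 ?addr0 => [|m _].
  rewrite (bigD1 k) //= mevalZ phi_v_val eqxx mulr1 big1 ?addr0 // => m /negbTE mk.
  by rewrite mevalZ phi_v_val mk mulr0.
rewrite (big_morph _ (mevalD _) (meval0 _)) big1 // => n nm.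
by rewrite mevalZ phi_e_val ?mulr0 // eq_sym.
Qed.

Lemma pex_der f g i j : i != j -> (dderiv (edge a i j) (pex f g)).@[a i] = g i j.
Proof.
move=> ij; rewrite /pex dderivD !dderiv_sum mevalD !(big_morph _ (mevalD _) (meval0 _)).
rewrite big1 ?add0r => [|m _]; last by rewrite dderivZ mevalZ phi_v_der ?mulr0.
rewrite (eq_bigr (fun m => \sum_(n < d.+1 | n != m) g m n * ((m == i) && (n == j))%:R)); last first.
  move=> m _; rewrite dderiv_sum (big_morph _ (mevalD _) (meval0 _)); apply eq_bigr => n nm.
  by rewrite dderivZ mevalZ phi_e_der // eq_sym.
rewrite (bigD1 i) //= (bigD1 j) /=; last by rewrite eq_sym.
rewrite !eqxx mulr1 big1 ?addr0 => [|n /andP [_ /negbTE ->]]; last by rewrite mulr0.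
rewrite big1 ?addr0 // => m /negbTE ->; by rewrite big1 // => n _; rewrite mulr0.
Qed.

End T.
End S.

Unset Implicit Arguments.
Set Strict Implicit.

Theorem mainTheorem1 (R : realFieldType) (d : nat) (hd : (2 <= d)%N)
    (a : 'I_d.+1 -> pt R d) (lam : 'I_d.+1 -> {mpoly R[d]})
    (hK : nondeg_simplex a) (hlam : barycentric a lam) :
  (forall (f : 'I_d.+1 -> R) (g : 'I_d.+1 -> 'I_d.+1 -> R),
     exists! p : {mpoly R[d]},
       [/\ inZ lam p,
           forall i, p.@[a i] = f i &
           forall i j, i != j -> (dderiv (edge a i j) p).@[a i] = g i j])
  /\
  (forall i, inZ lam (phi_v lam i) /\
     (forall k, (phi_v lam i).@[a k] = (i == k)%:R) /\
     (forall k l, k != l -> (dderiv (edge a k l) (phi_v lam i)).@[a k] = 0))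
  /\
  (forall i j, i != j -> inZ lam (phi_e lam i j) /\
     (forall k, (phi_e lam i j).@[a k] = 0) /\
     (forall k l, k != l ->
        (dderiv (edge a k l) (phi_e lam i j)).@[a k] = ((i == k) && (j == l))%:R)).
Proof.
split; last split.
- move=> f g; exists (pex lam f g); split.
    split; [exact: (pex_inZ hlam) | exact: (pex_val hlam) | exact: (pex_der hlam)].
  move=> p' [hz hv hdd]; apply/eqP; rewrite -subr_eq0; apply/eqP.
  apply: (uniq0 hK hlam).
  + by rewrite addrC -scaleN1r; apply: inZ_lin => //; apply: (pex_inZ hlam).
  + by move=> k; rewrite mevalB (pex_val hlam) hv subrr.
  + by move=> k l kl; rewrite dderivB mevalB (pex_der hlam) // hdd // subrr.
- move=> i; split; first exact: (phi_v_inZ hlam).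
  split; [exact: (phi_v_val hlam) | exact: (phi_v_der hlam)].
- move=> i j ij; split; first exact: (phi_e_inZ hlam).
  split; [move=> k; exact: (phi_e_val hlam k ij) | move=> k l kl; exact: (phi_e_der hlam ij kl)].
Qed.
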